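(* For every $\theta\in\mathcal{P}$ there exists $\beta\in\mathcal{KL}$ such that the following holds. Let $t_0\ge0$, $\tau\in(0,\infty]$, let $\omega:[t_0,t_0+\tau)\to\mathbb{R}_+$ be continuous, and let $\eta:[t_0,t_0+\tau)\to\mathbb{R}_+$ be right-continuous and piecewise continuous. If $$D^{+}\omega(t)\le -\theta(\omega(t))+\eta(t)\quad\text{for all } t\in[t_0,t_0+\tau),$$ then $$\omega(t)\le \beta(\omega(t_0),t-t_0)+2\int_{t_0}^{t}\eta(s)\,ds\quad\text{for all } t\in[t_0,t_0+\tau).$$
   Context: $D^+$ denotes the right upper Dini derivative: $D^+\omega(t)=\limsup_{h\to0^+}\frac{\omega(t+h)-\omega(t)}{h}$. Comparison functions: $\mathcal{P}$ is the set of continuous $\gamma:\mathbb{R}_+\to\mathbb{R}_+$ with $\gamma(0)=0$ and $\gamma(r)>0$ for $r>0$. $\mathcal{K}$ is the set of strictly increasing $\gamma\in\mathcal{P}$. $\mathcal{L}$ is the set of continuous, strictly decreasing $\gamma:\mathbb{R}_+\to\mathbb{R}_+$ with limit $0$ at $\infty$. $\mathcal{KL}$ is the set of continuous $\beta:\mathbb{R}_+^2\to\mathbb{R}_+$ such that $\beta(\cdot,t)\in\mathcal{K}$ for all $t\ge0$ and $\beta(r,\cdot)\in\mathcal{L}$ for all $r>0$. *)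

(* Defs.v *)
From Stdlib Require Import Reals Lra.
From Coquelicot Require Import Coquelicot.
Open Scope R_scope.

Definition cont_on_Rplus (g : R -> R) : Prop :=
  forall r, 0 <= r -> forall eps, 0 < eps -> exists delta, 0 < delta /\
    forall s, 0 <= s -> Rabs (s - r) < delta -> Rabs (g s - g r) < eps.

Definition classP (g : R -> R) : Prop :=
  cont_on_Rplus g /\ g 0 = 0 /\ (forall r, 0 < r -> 0 < g r).

Definition classK (g : R -> R) : Prop :=
  classP g /\ (forall r s, 0 <= r -> r < s -> g r < g s).

Definition classL (g : R -> R) : Prop :=
  cont_on_Rplus g /\ (forall r, 0 <= r -> 0 <= g r) /\
  (forall r s, 0 <= r -> r < s -> g s < g r) /\
  filterlim g (Rbar_locally p_infty) (locally 0).

Definition classKL (b : R -> R -> R) : Prop :=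
  (forall r t, 0 <= r -> 0 <= t -> forall eps, 0 < eps -> exists delta, 0 < delta /\
     forall r' t', 0 <= r' -> 0 <= t' -> Rabs (r' - r) < delta -> Rabs (t' - t) < delta ->
       Rabs (b r' t' - b r t) < eps) /\
  (forall t, 0 <= t -> classK (fun r => b r t)) /\
  (forall r, 0 < r -> classL (fun t => b r t)).

(* Right upper Dini derivative, as an extended real:
   D^+ w(t) = limsup_{h->0+} (w(t+h)-w(t))/h = inf_{d>0} sup_{0<h<d} (...). *)
Definition dini_upper (w : R -> R) (t : R) : Rbar :=
  Rbar_glb (fun y => exists d, 0 < d /\
    y = Rbar_lub (fun z => exists h, 0 < h < d /\ z = Finite ((w (t + h) - w t) / h))).

Definition in_dom (t0 : R) (tau : Rbar) (t : R) : Prop :=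
  t0 <= t /\ Rbar_lt (Finite t) (Rbar_plus (Finite t0) tau).

Definition cont_on_dom (t0 : R) (tau : Rbar) (w : R -> R) : Prop :=
  forall t, in_dom t0 tau t -> forall eps, 0 < eps -> exists delta, 0 < delta /\
    forall s, in_dom t0 tau s -> Rabs (s - t) < delta -> Rabs (w s - w t) < eps.

Definition right_cont_on_dom (t0 : R) (tau : Rbar) (e : R -> R) : Prop :=
  forall t, in_dom t0 tau t -> filterlim e (at_right t) (locally (e t)).

Definition piecewise_cont_on_dom (t0 : R) (tau : Rbar) (e : R -> R) : Prop :=
  forall b, in_dom t0 tau b -> exists (n : nat) (p : nat -> R),
    p 0%nat = t0 /\ p n = b /\
    (forall i, (i < n)%nat -> p i < p (S i)) /\
    (forall i, (i < n)%nat ->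
       (forall s, p i < s < p (S i) -> continuous e s) /\
       (exists l, filterlim e (at_right (p i)) (locally l)) /\
       (exists l, filterlim e (at_left (p (S i))) (locally l))).

(* Main.v *)
Require Import Defs.
From Stdlib Require Import Reals.
From Coquelicot Require Import Coquelicot.
From Stdlib Require Import Lra Lia Classical ClassicalEpsilon.
Open Scope R_scope.


Lemma slope_core (f : R -> R) (a b e : R) :
  a <= b -> 0 < e ->
  (forall x, a <= x <= b -> forall eps, 0 < eps -> exists delta, 0 < delta /\
     forall y, a <= y <= b -> Rabs (y - x) < delta -> Rabs (f y - f x) < eps) ->
  (forall x, a <= x < b -> forall e, 0 < e -> exists d, 0 < d /\
     forall h, 0 < h < d -> x + h <= b -> f (x+h) <= f x + e * h) ->
  f b <= f a + 2 * e * (b - a).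
Proof.
  intros Hab He Hc Hs.
  set (E := fun y => a <= y <= b /\ forall z, a <= z <= y -> f z <= f a + 2*e*(z - a)).
  assert (HEa : E a).
  { split; [lra|]. intros z Hz. replace z with a by lra. lra. }
  assert (Hb : bound E).
  { exists b. intros y [Hy _]. lra. }
  destruct (completeness E Hb (ex_intro _ a HEa)) as [c [Hub Hlub]].
  assert (Hac : a <= c) by (apply Hub; exact HEa).
  assert (Hcb : c <= b) by (apply Hlub; intros y [Hy _]; lra).
  assert (Happ : forall dl, 0 < dl -> exists y, E y /\ c - dl < y).
  { intros dl Hdl. apply NNPP; intro Hn.
    assert (c <= c - dl); [|lra].
    apply Hlub. intros y Hy. apply Rnot_lt_le. intro Hlt. apply Hn. exists y. split; auto; lra. }
  assert (HEc : forall z, a <= z <= c -> f z <= f a + 2*e*(z - a)).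
  { intros z Hz. destruct (Rlt_or_le z c) as [Hzc|Hzc].
    - destruct (Happ (c - z)) as [y [[Hy1 Hy2] Hy3]]; [lra|]. apply Hy2. lra.
    - assert (z = c) by lra. subst z.
      apply Rnot_lt_le; intro Hgt.
      set (g := f c - f a - 2*e*(c-a)).
      assert (Hg : 0 < g) by (unfold g; lra).
      destruct (Hc c (conj Hac Hcb) (g/2)) as [dl [Hdl Hdl']]; [lra|].
      destruct (Happ dl Hdl) as [y [[Hy1 Hy2] Hy3]].
      assert (y <= c) by (apply Hub; split; auto).
      specialize (Hy2 y (conj (proj1 Hy1) (Rle_refl y))).
      specialize (Hdl' y Hy1). assert (Rabs (y - c) < dl) by (apply Rabs_def1; lra).
      specialize (Hdl' H0). apply Rabs_def2 in Hdl'. unfold g in *. nra. }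
  assert (Hcb' : c = b).
  { destruct (Rlt_or_le c b) as [Hlt|]; [|lra].
    destruct (Hs c (conj Hac Hlt) e He) as [d [Hd Hd']].
    set (h := Rmin (d/2) (b - c)).
    assert (Hh : 0 < h) by (unfold h; apply Rmin_glb_lt; lra).
    assert (Hh2 : h <= d/2) by apply Rmin_l.
    assert (Hh3 : h <= b - c) by apply Rmin_r.
    assert (E (c + h)).
    { split; [lra|]. intros z Hz. destruct (Rle_or_lt z c).
      - apply HEc; lra.
      - replace z with (c + (z - c)) by ring.
        assert (f (c + (z - c)) <= f c + e * (z - c)) by (apply Hd'; lra).
        assert (f c <= f a + 2*e*(c - a)) by (apply HEc; lra). nra. }
    assert (c + h <= c) by (apply Hub; auto). lra. }
  subst c. apply HEc. lra.
Qed.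

Lemma slope_lemma (f : R -> R) (a b : R) :
  a <= b ->
  (forall x, a <= x <= b -> forall eps, 0 < eps -> exists delta, 0 < delta /\
     forall y, a <= y <= b -> Rabs (y - x) < delta -> Rabs (f y - f x) < eps) ->
  (forall x, a <= x < b -> forall e, 0 < e -> exists d, 0 < d /\
     forall h, 0 < h < d -> x + h <= b -> f (x+h) <= f x + e * h) ->
  f b <= f a.
Proof.
  intros Hab Hc Hs.
  destruct (Rle_dec (f b) (f a)) as [|Hn]; auto.
  exfalso. apply Rnot_le_lt in Hn.
  set (e := (f b - f a) / (4 * (b - a) + 1)).
  assert (He : 0 < e) by (unfold e; apply Rdiv_lt_0_compat; lra).
  pose proof (slope_core f a b e Hab He Hc Hs) as K.
  assert (e * (4 * (b - a) + 1) = f b - f a) by (unfold e; field; lra).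
  nra.
Qed.

Lemma dini_eps (w : R -> R) (t c : R) :
  Rbar_le (dini_upper w t) (Finite c) -> forall e, 0 < e -> exists d, 0 < d /\
    forall h, 0 < h < d -> w (t + h) - w t <= (c + e) * h.
Proof.
  intros H e He. unfold dini_upper, Rbar_glb in H.
  destruct (Rbar_ex_glb _) as [l [Hlb Hg]]; simpl in H.
  assert (Hex : exists y, (exists d, 0 < d /\ y = Rbar_lub (fun z => exists h, 0 < h < d /\
      z = Finite ((w (t + h) - w t) / h))) /\ Rbar_lt y (Finite (c + e))).
  { apply NNPP; intro Hn.
    assert (Hl : Rbar_le (Finite (c + e)) l).
    { apply Hg. intros y Hy. apply Rbar_not_lt_le. intro Hlt. apply Hn. exists y. auto. }
    destruct l as [l| |]; simpl in *; lra. }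
  destruct Hex as [y [[d [Hd Hyd]] Hy]]. subst y.
  exists d. split; auto. intros h Hh.
  unfold Rbar_lub in Hy. destruct (Rbar_ex_lub _) as [m [Hub Hlu]]; simpl in Hy.
  assert (Hq : Rbar_le (Finite ((w (t + h) - w t) / h)) m) by (apply Hub; exists h; auto).
  assert (Hq' : Rbar_lt (Finite ((w (t + h) - w t) / h)) (Finite (c + e)))
    by (eapply Rbar_le_lt_trans; eauto).
  simpl in Hq'.
  assert (w (t + h) - w t = ((w (t + h) - w t) / h) * h) by (field; lra).
  rewrite H0. apply Rmult_le_compat_r; lra.
Qed.

Lemma cont_pt_eps (f : R -> R) (x : R) :
  (forall eps, 0 < eps -> exists d, 0 < d /\ forall y, Rabs (y - x) < d -> Rabs (f y - f x) < eps) ->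
  continuity_pt f x.
Proof.
  intros H eps Heps. destruct (H eps Heps) as [d [Hd Hd']].
  exists d. split; auto. intros y [_ Hy]. simpl in *. unfold R_dist in *. apply Hd'. auto.
Qed.

Lemma eps_cont_pt (f : R -> R) (x : R) :
  continuity_pt f x ->
  forall eps, 0 < eps -> exists d, 0 < d /\ forall y, Rabs (y - x) < d -> Rabs (f y - f x) < eps.
Proof.
  intros H eps Heps. destruct (H eps Heps) as [d [Hd Hd']].
  exists d. split; auto. intros y Hy.
  destruct (Req_dec y x) as [->|Hne].
  - unfold Rminus. rewrite Rplus_opp_r, Rabs_R0. auto.
  - apply (Hd' y). split; [split; [exact I| auto]|]. simpl. unfold R_dist. auto.
Qed.

Lemma Rmin_close a b c d e :
  Rabs (a - c) < e -> Rabs (b - d) < e -> Rabs (Rmin a b - Rmin c d) < e.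
Proof.
  intros H1 H2. apply Rabs_def2 in H1. apply Rabs_def2 in H2.
  unfold Rmin; destruct (Rle_dec a b); destruct (Rle_dec c d); apply Rabs_def1; lra.
Qed.

Definition thetae (th : R -> R) (x : R) := th (Rabs x).

Lemma thetae_cont th : cont_on_Rplus th -> forall x, continuity_pt (thetae th) x.
Proof.
  intros Hc x. apply cont_pt_eps. intros eps Heps.
  destruct (Hc (Rabs x) (Rabs_pos x) eps Heps) as [d [Hd Hd']].
  exists d. split; auto. intros y Hy. unfold thetae. apply Hd'.
  - apply Rabs_pos.
  - eapply Rle_lt_trans; [apply Rabs_triang_inv2|]. auto.
Qed.

Lemma ex_argmin th : cont_on_Rplus th -> forall s, exists x,
  Rmin s (2*s) <= x <= Rmax s (2*s) /\
  forall y, Rmin s (2*s) <= y <= Rmax s (2*s) -> thetae th x <= thetae th y.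
Proof.
  intros Hc s. destruct (continuity_ab_min (thetae th) (Rmin s (2*s)) (Rmax s (2*s))) as [x [H1 H2]].
  - apply Rle_trans with s; [apply Rmin_l|apply Rmax_l].
  - intros; apply thetae_cont; auto.
  - exists x; split; auto.
Qed.

Definition xmin (th : R -> R) (Hc : cont_on_Rplus th) (s : R) : R :=
  proj1_sig (constructive_indefinite_description _ (ex_argmin th Hc s)).

Lemma xmin_spec th Hc s : 0 < s ->
  s <= xmin th Hc s <= 2*s /\ forall y, s <= y <= 2*s -> thetae th (xmin th Hc s) <= thetae th y.
Proof.
  intros Hs. unfold xmin. destruct (constructive_indefinite_description _ _) as [x [H1 H2]]; simpl.
  rewrite Rmin_left in *by lra. rewrite Rmax_right in * by lra. auto.
Qed.

Definition mth th Hc s := thetae th (xmin th Hc s).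
Definition rhat th Hc s := Rmin s (mth th Hc s).

Lemma mth_cont th Hc s0 : 0 < s0 -> forall eps, 0 < eps -> exists d, 0 < d /\
  forall s, Rabs (s - s0) < d -> Rabs (mth th Hc s - mth th Hc s0) < eps.
Proof.
  intros Hs0 eps Heps.
  destruct (Heine (thetae th) (fun c => s0/2 <= c <= 4*s0) (compact_P3 _ _)
     (fun x _ => thetae_cont th Hc x) (mkposreal eps Heps)) as [[d0 Hd0] Hu]. simpl in Hu.
  exists (Rmin (s0/2) (d0/2)). split. { apply Rmin_glb_lt; lra. }
  intros s Hs. assert (Hs1 : Rabs (s - s0) < s0/2) by (eapply Rlt_le_trans; [apply Hs| apply Rmin_l]).
  assert (Hs2 : Rabs (s - s0) < d0/2) by (eapply Rlt_le_trans; [apply Hs| apply Rmin_r]).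
  apply Rabs_def2 in Hs1. assert (Hsp : 0 < s) by lra.
  destruct (xmin_spec th Hc s Hsp) as [[A1 A2] A3].
  destruct (xmin_spec th Hc s0 Hs0) as [[B1 B2] B3].
  set (x := xmin th Hc s) in *. set (x0 := xmin th Hc s0) in *.
  unfold mth. fold x x0.
  assert (U1 : thetae th x <= thetae th (x0 * s / s0)).
  { apply A3. split.
    - apply Rmult_le_reg_r with s0; auto. field_simplify; [|lra]. nra.
    - apply Rmult_le_reg_r with s0; auto. field_simplify; [|lra]. nra. }
  assert (U2 : thetae th x0 <= thetae th (x * s0 / s)).
  { apply B3. split.
    - apply Rmult_le_reg_r with s; auto. field_simplify; [|lra]. nra.
    - apply Rmult_le_reg_r with s; auto. field_simplify; [|lra]. nra. }
  assert (V1 : Rabs (thetae th (x0 * s / s0) - thetae th x0) < eps).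
  { apply Hu.
    - split; apply Rmult_le_reg_r with s0; auto; field_simplify; try lra; nra.
    - lra.
    - replace (x0 * s / s0 - x0) with ((x0/s0) * (s - s0)) by (field; lra).
      rewrite Rabs_mult. rewrite (Rabs_right (x0/s0)).
      2:{ apply Rle_ge, Rlt_le, Rdiv_lt_0_compat; lra. }
      apply Rle_lt_trans with (2 * Rabs (s - s0)); [|lra].
      apply Rmult_le_compat_r; [apply Rabs_pos|].
      apply Rmult_le_reg_r with s0; auto. field_simplify; lra. }
  assert (V2 : Rabs (thetae th (x * s0 / s) - thetae th x) < eps).
  { apply Hu.
    - split; apply Rmult_le_reg_r with s; auto; field_simplify; try lra; nra.
    - lra.
    - replace (x * s0 / s - x) with ((x/s) * (s0 - s)) by (field; lra).
      rewrite Rabs_mult. rewrite (Rabs_right (x/s)).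
      2:{ apply Rle_ge, Rlt_le, Rdiv_lt_0_compat; lra. }
      rewrite Rabs_minus_sym.
      apply Rle_lt_trans with (2 * Rabs (s - s0)); [|lra].
      apply Rmult_le_compat_r; [apply Rabs_pos|].
      apply Rmult_le_reg_r with s; auto. field_simplify; lra. }
  apply Rabs_def2 in V1. apply Rabs_def2 in V2. apply Rabs_def1; lra.
Qed.

Lemma rhat_pos th (HP : classP th) s : 0 < s -> 0 < rhat th (proj1 HP) s.
Proof.
  intros Hs. pose proof HP as [Hc0 [H0 Hp]].
  destruct (xmin_spec th (proj1 HP) s Hs) as [[A1 A2] _].
  unfold rhat, mth, thetae. apply Rmin_glb_lt; auto. apply Hp.
  rewrite Rabs_right; lra.
Qed.

Lemma rhat_le_s th Hc s : rhat th Hc s <= s.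
Proof. apply Rmin_l. Qed.

Lemma rhat_le_th th Hc s y : 0 < s -> s <= y <= 2*s -> rhat th Hc s <= th y.
Proof.
  intros Hs Hy. destruct (xmin_spec th Hc s Hs) as [_ A3].
  unfold rhat. eapply Rle_trans; [apply Rmin_r|]. unfold mth.
  replace (th y) with (thetae th y) by (unfold thetae; rewrite Rabs_right; auto; lra).
  apply A3; auto.
Qed.

Lemma rhat_cont th Hc s0 : 0 < s0 -> continuity_pt (rhat th Hc) s0.
Proof.
  intros Hs0. apply cont_pt_eps. intros eps Heps.
  destruct (mth_cont th Hc s0 Hs0 eps Heps) as [d [Hd Hd']].
  exists (Rmin d eps). split; [apply Rmin_glb_lt; auto|].
  intros y Hy. unfold rhat. apply Rmin_close.
  - eapply Rlt_le_trans; [apply Hy|apply Rmin_r].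
  - apply Hd'. eapply Rlt_le_trans; [apply Hy|apply Rmin_l].
Qed.

Definition gfun th Hc (x : R) := / rhat th Hc x.

Lemma gfun_cont_pt th (HP : classP th) x : 0 < x -> continuity_pt (gfun th (proj1 HP)) x.
Proof.
  intros Hx. apply (continuity_pt_inv (rhat th (proj1 HP))).
  - apply rhat_cont; auto.
  - apply Rgt_not_eq, rhat_pos; auto.
Qed.

Lemma gfun_cont th (HP : classP th) x : 0 < x -> continuous (gfun th (proj1 HP)) x.
Proof. intros Hx. apply continuity_pt_filterlim. apply gfun_cont_pt; auto. Qed.

Lemma gfun_pos th (HP : classP th) x : 0 < x -> 0 < gfun th (proj1 HP) x.
Proof. intros Hx. unfold gfun. apply Rinv_0_lt_compat, rhat_pos; auto. Qed.

Lemma gfun_ge th (HP : classP th) x : 0 < x -> / x <= gfun th (proj1 HP) x.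
Proof. intros Hx. unfold gfun. apply Rinv_le_contravar; [apply rhat_pos; auto|apply rhat_le_s]. Qed.

Lemma gfun_ex th (HP : classP th) a b : 0 < a -> 0 < b -> ex_RInt (gfun th (proj1 HP)) a b.
Proof.
  intros Ha Hb. apply (ex_RInt_continuous (V := R_CompleteNormedModule)). intros z Hz. apply gfun_cont.
  eapply Rlt_le_trans; [|apply Hz]. unfold Rmin; destruct Rle_dec; auto.
Qed.

Definition Gf th (HP : classP th) (s : R) := RInt (gfun th (proj1 HP)) s 1.

Lemma Gf_diff th HP x y : 0 < x -> 0 < y -> Gf th HP y - Gf th HP x = RInt (gfun th (proj1 HP)) y x.
Proof.
  intros Hx Hy. unfold Gf.
  rewrite <- (RInt_Chasles (gfun th (proj1 HP)) y x 1); try apply gfun_ex; try lra.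
  unfold plus; simpl. ring.
Qed.

Lemma Gf_lower th HP y x c : 0 < y -> y < x -> (forall z, y < z < x -> c <= gfun th (proj1 HP) z) ->
  Gf th HP y - Gf th HP x >= (x - y) * c.
Proof.
  intros Hy Hyx Hc. rewrite Gf_diff by lra. apply Rle_ge.
  replace ((x - y) * c) with (RInt (fun _ => c) y x) by (rewrite RInt_const; reflexivity).
  apply RInt_le; [lra|apply ex_RInt_const|apply gfun_ex; lra|]. auto.
Qed.

Lemma Gf_upper th HP y x c : 0 < y -> y < x -> (forall z, y < z < x -> gfun th (proj1 HP) z <= c) ->
  Gf th HP y - Gf th HP x <= (x - y) * c.
Proof.
  intros Hy Hyx Hc. rewrite Gf_diff by lra.
  replace ((x - y) * c) with (RInt (fun _ => c) y x) by (rewrite RInt_const; reflexivity).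
  apply RInt_le; [lra|apply gfun_ex; lra|apply ex_RInt_const|]. auto.
Qed.

Lemma Gf_strict th HP y x : 0 < y -> y < x -> Gf th HP x < Gf th HP y.
Proof.
  intros Hy Hyx. assert (0 < RInt (gfun th (proj1 HP)) y x).
  { apply RInt_gt_0; auto. - intros; apply gfun_pos; lra. - intros; apply gfun_cont; lra. }
  rewrite <- Gf_diff in H; lra.
Qed.

Lemma Gf_mono th HP y x : 0 < y -> y <= x -> Gf th HP x <= Gf th HP y.
Proof. intros Hy Hyx. destruct (Req_dec y x) as [->|]; [lra|]. apply Rlt_le, Gf_strict; lra. Qed.

Lemma Gf_half th HP s : 0 < s -> Gf th HP (s/2) >= Gf th HP s + / 2.
Proof.
  intros Hs. assert (Gf th HP (s/2) - Gf th HP s >= (s - s/2) * / s).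
  { apply Gf_lower; try lra. intros z Hz. eapply Rle_trans; [|apply gfun_ge; lra].
    apply Rinv_le_contravar; lra. }
  replace ((s - s/2) * / s) with (/2) in H by (field; lra). lra.
Qed.

Lemma Gf_double th HP s : 0 < s -> Gf th HP (2*s) <= Gf th HP s - / 2.
Proof.
  intros Hs. assert (Gf th HP s - Gf th HP (2*s) >= (2*s - s) * / (2*s)).
  { apply Gf_lower; try lra. intros z Hz. eapply Rle_trans; [|apply gfun_ge; lra].
    apply Rinv_le_contravar; lra. }
  replace ((2*s - s) * / (2*s)) with (/2) in H by (field; lra). lra.
Qed.

Lemma Gf_halfn th HP n : Gf th HP (/ 2 ^ n) >= Gf th HP 1 + INR n / 2.
Proof.
  induction n.
  - simpl. rewrite Rinv_1. lra.
  - assert (Hp : 0 < / 2 ^ n) by (apply Rinv_0_lt_compat, pow_lt; lra).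
    replace (/ 2 ^ S n) with (/ 2 ^ n / 2) by (simpl; field; apply pow_nonzero; lra).
    pose proof (Gf_half th HP _ Hp). pose proof (S_INR n). lra.
Qed.

Lemma Gf_doublen th HP n : Gf th HP (2 ^ n) <= Gf th HP 1 - INR n / 2.
Proof.
  induction n.
  - simpl. lra.
  - assert (Hp : 0 < 2 ^ n) by (apply pow_lt; lra).
    change (2 ^ S n) with (2 * 2 ^ n). pose proof (Gf_double th HP _ Hp). pose proof (S_INR n). lra.
Qed.

Lemma Gf_cont th HP x0 : 0 < x0 -> forall eps, 0 < eps -> exists d, 0 < d /\
  forall y, Rabs (y - x0) < d -> 0 < y /\ Rabs (Gf th HP y - Gf th HP x0) < eps.
Proof.
  intros Hx0 eps Heps.
  destruct (ex_RInt_ub (gfun th (proj1 HP)) (x0/2) (2*x0)) as [M HM].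
  { apply gfun_ex; lra. }
  rewrite Rmin_left in HM by lra. rewrite Rmax_right in HM by lra.
  assert (HM' : forall t, x0/2 <= t <= 2*x0 -> Rabs (gfun th (proj1 HP) t) <= M)
    by (intros t Ht; apply (HM t Ht)). clear HM. rename HM' into HM.
  assert (HM0 : 0 <= M).
  { eapply Rle_trans; [apply Rabs_pos|]. apply (HM x0). lra. }
  exists (Rmin (x0/2) (eps / (M+1))). split.
  { apply Rmin_glb_lt; [lra|]. apply Rdiv_lt_0_compat; lra. }
  intros y Hy. assert (Hy1 : Rabs (y - x0) < x0/2) by (eapply Rlt_le_trans; [apply Hy|apply Rmin_l]).
  assert (Hy2 : Rabs (y - x0) < eps / (M+1)) by (eapply Rlt_le_trans; [apply Hy|apply Rmin_r]).
  pose proof Hy1 as Hy1'. apply Rabs_def2 in Hy1'. split; [lra|].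
  rewrite Gf_diff by lra.
  assert (Hb : forall a b, x0/2 <= a -> a <= b -> b <= 2*x0 -> Rabs (RInt (gfun th (proj1 HP)) a b) <= (b - a) * M).
  { intros a b Ha Hab Hb. apply abs_RInt_le_const; auto. apply gfun_ex; lra.
    intros t Ht. apply (HM t). lra. }
  assert (Hle : Rabs (RInt (gfun th (proj1 HP)) y x0) <= Rabs (y - x0) * M).
  { destruct (Rle_or_lt y x0).
    - rewrite (Rabs_left1 (y - x0)) by lra. replace (- (y - x0)) with (x0 - y) by ring.
      apply Hb; lra.
    - rewrite <- opp_RInt_swap by (apply gfun_ex; lra). unfold opp; simpl. rewrite Rabs_Ropp.
      rewrite (Rabs_right (y - x0)) by lra. apply Hb; lra. }
  eapply Rle_lt_trans; [apply Hle|].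
  assert (Rabs (y - x0) * M <= Rabs (y - x0) * (M + 1)) by (apply Rmult_le_compat_l; [apply Rabs_pos|lra]).
  assert (Rabs (y - x0) * (M + 1) < eps).
  { apply Rmult_lt_reg_r with (/ (M+1)); [apply Rinv_0_lt_compat; lra|].
    replace (Rabs (y - x0) * (M + 1) * / (M + 1)) with (Rabs (y - x0)) by (field; lra). auto. }
  lra.
Qed.

Lemma Gf_local th HP v : 0 < v -> forall e, 0 < e -> exists d, 0 < d /\
  forall y, v - d < y < v -> Gf th HP y - Gf th HP v >= (v - y) * (gfun th (proj1 HP) v - e).
Proof.
  intros Hv e He.
  destruct (eps_cont_pt _ _ (gfun_cont_pt th HP v Hv) e He) as [d [Hd Hd']].
  exists (Rmin d (v/2)). split; [apply Rmin_glb_lt; lra|].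
  intros y Hy. assert (Rmin d (v/2) <= d) by apply Rmin_l. assert (Rmin d (v/2) <= v/2) by apply Rmin_r.
  apply Gf_lower; try lra. intros z Hz.
  assert (Rabs (z - v) < d) by (apply Rabs_def1; lra).
  specialize (Hd' z H1). apply Rabs_def2 in Hd'. lra.
Qed.

Lemma clamp_lip a b x y : a <= b ->
  Rabs (Rmax a (Rmin b x) - Rmax a (Rmin b y)) <= Rabs (x - y).
Proof.
  intros Hab. unfold Rmax, Rmin.
  destruct (Rle_dec b x); destruct (Rle_dec b y);
  repeat match goal with |- context [Rle_dec ?a ?b] => destruct (Rle_dec a b) end;
  unfold Rabs; repeat match goal with |- context [Rcase_abs ?a] => destruct (Rcase_abs a) end; lra.
Qed.

Lemma Gf_surj th HP y : exists s, 0 < s /\ Gf th HP s = y.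
Proof.
  destruct (INR_unbounded (2 * Rabs (y - Gf th HP 1))) as [n Hn].
  set (a := / 2 ^ n). set (b := 2 ^ n).
  assert (Hb1 : 1 <= b) by (unfold b; apply pow_R1_Rle; lra).
  assert (Ha0 : 0 < a) by (unfold a; apply Rinv_0_lt_compat, pow_lt; lra).
  assert (Ha1 : a <= 1) by (unfold a; rewrite <- Rinv_1; apply Rinv_le_contravar; [lra|apply pow_R1_Rle; lra]).
  assert (HGa : Gf th HP a >= y).
  { pose proof (Gf_halfn th HP n). pose proof (Rle_abs (y - Gf th HP 1)). fold a in H. lra. }
  assert (HGb : Gf th HP b <= y).
  { pose proof (Gf_doublen th HP n). pose proof (Rle_abs (- (y - Gf th HP 1))).
    rewrite Rabs_Ropp in H0. fold b in H. lra. }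
  set (Gc := fun x => Gf th HP (Rmax a (Rmin b x))).
  assert (Hc : forall x : R_UniformSpace, continuous Gc x).
  { intros x. apply continuity_pt_filterlim. apply cont_pt_eps. intros eps Heps.
    set (c := Rmax a (Rmin b x)).
    assert (Hc0 : 0 < c) by (unfold c; eapply Rlt_le_trans; [apply Ha0|apply Rmax_l]).
    destruct (Gf_cont th HP c Hc0 eps Heps) as [d [Hd Hd']].
    exists d. split; auto. intros y0 Hy0. unfold Gc. apply Hd'.
    eapply Rle_lt_trans; [apply clamp_lip; lra|]. auto. }
  assert (Hy : Rmin (Gc a) (Gc b) <= y <= Rmax (Gc a) (Gc b)).
  { unfold Gc. rewrite (Rmin_right b a) by lra. rewrite (Rmax_right a a) by lra.
    rewrite (Rmin_left b b) by lra. rewrite (Rmax_right a b) by lra.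
    split; [apply Rle_trans with (Gf th HP b); [apply Rmin_r|lra]|apply Rle_trans with (Gf th HP a); [lra|apply Rmax_l]]. }
  destruct (IVT_gen_consistent Gc a b y Hc Hy) as [x [Hx Hxy]].
  rewrite Rmin_left in Hx by lra. rewrite Rmax_right in Hx by lra.
  exists x. split; [lra|]. unfold Gc in Hxy.
  rewrite Rmin_right in Hxy by lra. rewrite Rmax_right in Hxy by lra. auto.
Qed.

Definition Hinv th HP y := proj1_sig (constructive_indefinite_description _ (Gf_surj th HP y)).

Lemma Hinv_spec th HP y : 0 < Hinv th HP y /\ Gf th HP (Hinv th HP y) = y.
Proof. unfold Hinv. destruct (constructive_indefinite_description _ _) as [s Hs]. simpl. auto. Qed.

Lemma Gf_inj th HP x y : 0 < x -> 0 < y -> Gf th HP x = Gf th HP y -> x = y.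
Proof.
  intros Hx Hy H. destruct (Rtotal_order x y) as [Hl|[He|Hl]]; auto.
  - pose proof (Gf_strict th HP x y Hx Hl). lra.
  - pose proof (Gf_strict th HP y x Hy Hl). lra.
Qed.

Lemma Hinv_Gf th HP s : 0 < s -> Hinv th HP (Gf th HP s) = s.
Proof. intros Hs. destruct (Hinv_spec th HP (Gf th HP s)). apply (Gf_inj th HP); auto. Qed.

Lemma Hinv_strict th HP y1 y2 : y1 < y2 -> Hinv th HP y2 < Hinv th HP y1.
Proof.
  intros H. destruct (Hinv_spec th HP y1) as [A1 A2]. destruct (Hinv_spec th HP y2) as [B1 B2].
  destruct (Rlt_or_le (Hinv th HP y2) (Hinv th HP y1)) as [|Hle]; auto.
  pose proof (Gf_mono th HP _ _ A1 Hle). lra.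
Qed.

Lemma Hinv_mono th HP y1 y2 : y1 <= y2 -> Hinv th HP y2 <= Hinv th HP y1.
Proof. intros H. destruct (Req_dec y1 y2) as [->|]; [lra|]. apply Rlt_le, Hinv_strict; lra. Qed.

Lemma Hinv_cont th HP y0 : forall eps, 0 < eps -> exists d, 0 < d /\
  forall y, Rabs (y - y0) < d -> Rabs (Hinv th HP y - Hinv th HP y0) < eps.
Proof.
  intros eps Heps. destruct (Hinv_spec th HP y0) as [A1 A2]. set (s0 := Hinv th HP y0) in *.
  set (e := Rmin eps (s0/2)).
  assert (He : 0 < e) by (unfold e; apply Rmin_glb_lt; lra).
  assert (He1 : e <= eps) by apply Rmin_l. assert (He2 : e <= s0/2) by apply Rmin_r.
  set (y1 := Gf th HP (s0 - e)). set (y2 := Gf th HP (s0 + e)).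
  assert (Hy1 : y0 < y1) by (unfold y1; rewrite <- A2; apply Gf_strict; lra).
  assert (Hy2 : y2 < y0) by (unfold y2; rewrite <- A2; apply Gf_strict; lra).
  exists (Rmin (y1 - y0) (y0 - y2)). split; [apply Rmin_glb_lt; lra|].
  intros y Hy. assert (Rmin (y1 - y0) (y0 - y2) <= y1 - y0) by apply Rmin_l.
  assert (Rmin (y1 - y0) (y0 - y2) <= y0 - y2) by apply Rmin_r.
  apply Rabs_def2 in Hy. destruct (Hinv_spec th HP y) as [C1 C2].
  apply Rabs_def1.
  - destruct (Rlt_or_le (Hinv th HP y) (s0 + e)) as [|Hle]; [lra|].
    pose proof (Gf_mono th HP (s0 + e) (Hinv th HP y) ltac:(lra) Hle). fold y2 in H1. lra.
  - destruct (Rlt_or_le (s0 - e) (Hinv th HP y)) as [|Hle]; [lra|].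
    pose proof (Gf_mono th HP _ _ C1 Hle). fold y1 in H1. lra.
Qed.

Lemma Hinv_small th HP e y : 0 < e -> Gf th HP e < y -> Hinv th HP y < e.
Proof.
  intros He Hy. destruct (Hinv_spec th HP y) as [C1 C2].
  destruct (Rlt_or_le (Hinv th HP y) e) as [|Hle]; auto.
  pose proof (Gf_mono th HP _ _ He Hle). lra.
Qed.

Definition beta th HP (r t : R) : R :=
  if Rlt_dec 0 r then Hinv th HP (Gf th HP r + t) else 0.

Lemma beta_pos th HP r t : 0 < r -> beta th HP r t = Hinv th HP (Gf th HP r + t).
Proof. intros H. unfold beta. destruct (Rlt_dec 0 r); [auto|lra]. Qed.

Lemma beta_nonpos th HP r t : ~ 0 < r -> beta th HP r t = 0.
Proof. intros H. unfold beta. destruct (Rlt_dec 0 r); [lra|auto]. Qed.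

Lemma beta_ge0 th HP r t : 0 <= beta th HP r t.
Proof.
  destruct (Rlt_dec 0 r). - rewrite beta_pos by auto. apply Rlt_le, Hinv_spec.
  - rewrite beta_nonpos by auto. lra.
Qed.

Lemma beta_le_r th HP r t : 0 < r -> 0 <= t -> beta th HP r t <= r.
Proof.
  intros Hr Ht. rewrite beta_pos by auto. rewrite <- (Hinv_Gf th HP r Hr) at 2.
  apply Hinv_mono. lra.
Qed.

Lemma beta_joint th HP r t : 0 <= r -> 0 <= t -> forall eps, 0 < eps -> exists delta, 0 < delta /\
     forall r' t', 0 <= r' -> 0 <= t' -> Rabs (r' - r) < delta -> Rabs (t' - t) < delta ->
       Rabs (beta th HP r' t' - beta th HP r t) < eps.
Proof.
  intros Hr Ht eps Heps. destruct (Rlt_dec 0 r) as [Hr0|Hr0].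
  - destruct (Hinv_cont th HP (Gf th HP r + t) eps Heps) as [dH [HdH HdH']].
    destruct (Gf_cont th HP r Hr0 (dH/2) ltac:(lra)) as [dG [HdG HdG']].
    exists (Rmin dG (dH/2)). split; [apply Rmin_glb_lt; lra|].
    intros r' t' Hr' Ht' H1 H2.
    assert (Rmin dG (dH/2) <= dG) by apply Rmin_l. assert (Rmin dG (dH/2) <= dH/2) by apply Rmin_r.
    destruct (HdG' r' ltac:(lra)) as [Hr'0 HG].
    rewrite !beta_pos by auto. apply HdH'.
    apply Rabs_def2 in HG. apply Rabs_def2 in H2. apply Rabs_def1; lra.
  - assert (r = 0) by lra. subst r. rewrite beta_nonpos by auto.
    exists eps. split; auto. intros r' t' Hr' Ht' H1 H2.
    rewrite Rminus_0_r. rewrite Rminus_0_r in H1.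
    destruct (Rlt_dec 0 r') as [Hp|Hp].
    + pose proof (beta_le_r th HP r' t' Hp Ht'). pose proof (beta_ge0 th HP r' t').
      rewrite Rabs_right in * by lra. lra.
    + rewrite beta_nonpos by auto. rewrite Rabs_R0. auto.
Qed.

Lemma beta_KL th HP : classKL (beta th HP).
Proof.
  split; [|split].
  - intros r t Hr Ht. apply beta_joint; auto.
  - intros t Ht. split; [split; [|split]|].
    + intros r Hr eps Heps. destruct (beta_joint th HP r t Hr Ht eps Heps) as [d [Hd Hd']].
      exists d. split; auto. intros s Hs Hsr. apply Hd'; auto. rewrite Rminus_diag, Rabs_R0. auto.
    + apply beta_nonpos. lra.
    + intros r Hr. rewrite beta_pos by auto. apply Hinv_spec.
    + intros r s Hr Hrs. rewrite (beta_pos th HP s) by lra.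
      destruct (Rlt_dec 0 r) as [Hr0|Hr0].
      * rewrite beta_pos by auto. apply Hinv_strict. pose proof (Gf_strict th HP r s Hr0 Hrs). lra.
      * rewrite beta_nonpos by auto. apply Hinv_spec.
  - intros r Hr. split; [|split; [|split]].
    + intros t Ht eps Heps. destruct (beta_joint th HP r t (Rlt_le _ _ Hr) Ht eps Heps) as [d [Hd Hd']].
      exists d. split; auto. intros s Hs Hst. apply Hd'; auto; try lra. rewrite Rminus_diag, Rabs_R0. auto.
    + intros; apply beta_ge0.
    + intros t s Ht Hts. rewrite !beta_pos by auto. apply Hinv_strict. lra.
    + apply filterlim_locally. intros eps. simpl.
      exists (Gf th HP eps - Gf th HP r). intros t Ht.
      rewrite beta_pos by auto.
      destruct (Hinv_spec th HP (Gf th HP r + t)) as [C1 _].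
      assert (Hinv th HP (Gf th HP r + t) < eps).
      { apply Hinv_small. apply cond_pos. lra. }
      unfold ball; simpl. unfold AbsRing_ball, abs, minus, plus, opp; simpl.
      rewrite Ropp_0, Rplus_0_r, Rabs_right; lra.
Qed.

Lemma ball_R (x y eps : R) : ball x eps y <-> Rabs (y - x) < eps.
Proof. unfold ball; simpl. unfold AbsRing_ball, abs, minus, plus, opp; simpl. tauto. Qed.

Lemma at_right_eps f x l : filterlim f (at_right x) (locally l) ->
  forall eps, 0 < eps -> exists d, 0 < d /\ forall y, Rabs (y - x) < d -> x < y -> Rabs (f y - l) < eps.
Proof.
  intros H eps Heps. destruct (proj1 (filterlim_locally f l) H (mkposreal eps Heps)) as [d Hd].
  exists d. split; [apply cond_pos|]. intros y Hy Hxy.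
  apply ball_R. apply Hd; auto; apply ball_R; auto.
Qed.

Lemma at_left_eps f x l : filterlim f (at_left x) (locally l) ->
  forall eps, 0 < eps -> exists d, 0 < d /\ forall y, Rabs (y - x) < d -> y < x -> Rabs (f y - l) < eps.
Proof.
  intros H eps Heps. destruct (proj1 (filterlim_locally f l) H (mkposreal eps Heps)) as [d Hd].
  exists d. split; [apply cond_pos|]. intros y Hy Hxy.
  apply ball_R. apply Hd; auto; apply ball_R; auto.
Qed.

Lemma piece_ex (e : R -> R) a b : a < b ->
  (forall s, a < s < b -> continuous e s) ->
  (exists l, filterlim e (at_right a) (locally l)) ->
  (exists l, filterlim e (at_left b) (locally l)) ->
  ex_RInt e a b.
Proof.
  intros Hab Hc [l1 H1] [l2 H2].
  set (ext := fun x => if Rle_dec x a then l1 else if Rle_dec b x then l2 else e x).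
  assert (Hext : forall x, a < x < b -> ext x = e x).
  { intros x Hx. unfold ext. destruct (Rle_dec x a); [lra|]. destruct (Rle_dec b x); [lra|auto]. }
  apply (ex_RInt_ext (V := R_NormedModule) ext).
  { intros x Hx. rewrite Rmin_left in Hx by lra. rewrite Rmax_right in Hx by lra. auto. }
  apply (ex_RInt_continuous (V := R_CompleteNormedModule)).
  rewrite Rmin_left by lra. rewrite Rmax_right by lra.
  intros z Hz. apply continuity_pt_filterlim. apply cont_pt_eps. intros eps Heps.
  destruct (Req_dec z a) as [Hza|Hza]; [|destruct (Req_dec z b) as [Hzb|Hzb]].
  - subst z. destruct (at_right_eps e a l1 H1 eps Heps) as [d [Hd Hd']].
    exists (Rmin d (b - a)). split; [apply Rmin_glb_lt; lra|].
    intros y Hy. assert (Rmin d (b - a) <= d) by apply Rmin_l. assert (Rmin d (b-a) <= b - a) by apply Rmin_r.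
    assert (Hea : ext a = l1) by (unfold ext; destruct (Rle_dec a a); lra).
    rewrite Hea. destruct (Rle_dec y a).
    + unfold ext. destruct (Rle_dec y a); [|lra]. rewrite Rminus_diag, Rabs_R0. auto.
    + apply Rabs_def2 in Hy. rewrite Hext by lra. apply Hd'; [apply Rabs_def1; lra|lra].
  - subst z. destruct (at_left_eps e b l2 H2 eps Heps) as [d [Hd Hd']].
    exists (Rmin d (b - a)). split; [apply Rmin_glb_lt; lra|].
    intros y Hy. assert (Rmin d (b - a) <= d) by apply Rmin_l. assert (Rmin d (b-a) <= b - a) by apply Rmin_r.
    assert (Heb : ext b = l2) by (unfold ext; destruct (Rle_dec b a); [lra|]; destruct (Rle_dec b b); lra).
    rewrite Heb. apply Rabs_def2 in Hy. destruct (Rle_dec b y).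
    + unfold ext. destruct (Rle_dec y a); [lra|]. destruct (Rle_dec b y); [|lra]. rewrite Rminus_diag, Rabs_R0. auto.
    + rewrite Hext by lra. apply Hd'; [apply Rabs_def1; lra|lra].
  - assert (Hz' : a < z < b) by lra.
    pose proof (Hc z Hz') as Hcz. apply continuity_pt_filterlim in Hcz.
    destruct (eps_cont_pt e z Hcz eps Heps) as [d [Hd Hd']].
    exists (Rmin d (Rmin (z - a) (b - z))). split; [repeat apply Rmin_glb_lt; lra|].
    intros y Hy. assert (Rmin d (Rmin (z - a) (b - z)) <= d) by apply Rmin_l.
    assert (Rmin d (Rmin (z - a) (b - z)) <= Rmin (z - a) (b - z)) by apply Rmin_r.
    assert (Rmin (z - a) (b - z) <= z - a) by apply Rmin_l. assert (Rmin (z - a) (b - z) <= b - z) by apply Rmin_r.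
    apply Rabs_def2 in Hy as Hy'.
    rewrite !Hext by lra. apply Hd'. lra.
Qed.

Lemma eta_int t0 tau eta t : piecewise_cont_on_dom t0 tau eta -> in_dom t0 tau t -> ex_RInt eta t0 t.
Proof.
  intros Hpc Ht. destruct (Hpc t Ht) as [n [p [Hp0 [Hpn [Hinc Hpiece]]]]].
  assert (forall k, (k <= n)%nat -> ex_RInt eta (p 0%nat) (p k)).
  { induction k; intros Hk.
    - apply ex_RInt_point.
    - apply (ex_RInt_Chasles eta (p 0%nat) (p k) (p (S k))).
      + apply IHk. lia.
      + destruct (Hpiece k ltac:(lia)) as [A [B C]]. apply piece_ex; auto. }
  rewrite <- Hp0, <- Hpn. auto.
Qed.

Lemma theta_nonneg th : classP th -> forall x, 0 <= x -> 0 <= th x.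
Proof.
  intros [_ [H0 Hp]] x Hx. destruct (Req_dec x 0) as [->|]; [lra|]. apply Rlt_le, Hp. lra.
Qed.

Theorem mainTheorem2 :
  forall theta : R -> R, classP theta ->
  exists beta : R -> R -> R, classKL beta /\
  forall (t0 : R) (tau : Rbar) (omega eta : R -> R),
    0 <= t0 -> Rbar_lt (Finite 0) tau ->
    cont_on_dom t0 tau omega ->
    (forall t, in_dom t0 tau t -> 0 <= omega t) ->
    (forall t, in_dom t0 tau t -> 0 <= eta t) ->
    right_cont_on_dom t0 tau eta ->
    piecewise_cont_on_dom t0 tau eta ->
    (forall t, in_dom t0 tau t ->
       Rbar_le (dini_upper omega t) (Finite (- theta (omega t) + eta t))) ->
    forall t, in_dom t0 tau t ->
      omega t <= beta (omega t0) (t - t0) + 2 * RInt eta t0 t.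
Proof.
  intros th HP. exists (beta th HP). split; [apply beta_KL|].
  intros t0 tau om eta Ht0 Htau Homc Hompos Hetapos Hrc Hpc Hdini t Ht.
  assert (Hdom : forall x, t0 <= x <= t -> in_dom t0 tau x).
  { intros x Hx. destruct Ht as [Ht1 Ht2]. split; [lra|].
    eapply Rbar_le_lt_trans; [|apply Ht2]. simpl. lra. }
  assert (Htt : t0 <= t) by (destruct Ht; auto).
  assert (HexT : ex_RInt eta t0 t) by (eapply eta_int; eauto).
  assert (Hex : forall x y, t0 <= x -> x <= y -> y <= t -> ex_RInt eta x y).
  { intros x y H1 H2 H3. apply (ex_RInt_Chasles_2 eta t0 x y); [lra|].
    apply (ex_RInt_Chasles_1 eta t0 y t); [lra|auto]. }
  set (I := fun x => RInt eta t0 x).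
  assert (HIdiff : forall x y, t0 <= x -> x <= y -> y <= t -> I y - I x = RInt eta x y).
  { intros x y H1 H2 H3. unfold I. rewrite <- (RInt_Chasles eta t0 x y); try (apply Hex; lra).
    unfold plus; simpl. ring. }
  assert (HInn : forall x y, t0 <= x -> x <= y -> y <= t -> 0 <= RInt eta x y).
  { intros x y H1 H2 H3. apply RInt_ge_0; auto. intros z Hz. apply Hetapos, Hdom. lra. }
  assert (HImono : forall x y, t0 <= x -> x <= y -> y <= t -> I x <= I y).
  { intros x y H1 H2 H3. pose proof (HIdiff x y H1 H2 H3). pose proof (HInn x y H1 H2 H3). lra. }
  assert (HI0 : I t0 = 0) by (unfold I; apply (RInt_point (V := R_CompleteNormedModule))).
  assert (HIge0 : forall x, t0 <= x <= t -> 0 <= I x).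
  { intros x Hx. rewrite <- HI0. apply HImono; lra. }
  destruct (ex_RInt_ub eta t0 t HexT) as [M HM].
  rewrite Rmin_left in HM by lra. rewrite Rmax_right in HM by lra.
  assert (HM' : forall z, t0 <= z <= t -> Rabs (eta z) <= M) by (intros z Hz; apply (HM z Hz)).
  clear HM.
  assert (HM0 : 0 <= M) by (eapply Rle_trans; [apply Rabs_pos|apply (HM' t0)]; lra).
  assert (HIlip : forall x y, t0 <= x <= t -> t0 <= y <= t -> Rabs (I y - I x) <= M * Rabs (y - x)).
  { assert (K : forall x y, t0 <= x -> x <= y -> y <= t -> Rabs (I y - I x) <= M * Rabs (y - x)).
    { intros x y H1 H2 H3. rewrite HIdiff by lra. rewrite (Rabs_right (y - x)) by lra.
      rewrite Rmult_comm. apply abs_RInt_le_const; auto. intros; apply HM'; lra. }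
    intros x y Hx Hy. destruct (Rle_or_lt x y).
    - apply K; lra.
    - rewrite Rabs_minus_sym. rewrite (Rabs_minus_sym y x). apply K; lra. }
  assert (HIright : forall x, t0 <= x < t -> forall e, 0 < e -> exists d, 0 < d /\
     forall h, 0 < h < d -> x + h <= t -> I (x + h) - I x >= (eta x - e) * h).
  { intros x Hx e He. destruct (at_right_eps eta x (eta x) (Hrc x (Hdom x ltac:(lra))) e He) as [d [Hd Hd']].
    exists d. split; auto. intros h Hh Hxh. rewrite HIdiff by lra.
    replace ((eta x - e) * h) with (RInt (fun _ => eta x - e) x (x + h))
      by (rewrite RInt_const; simpl; unfold scal; simpl; unfold mult; simpl; ring).
    apply Rle_ge. apply RInt_le; [lra|apply ex_RInt_const|apply Hex; lra|].
    intros z Hz. assert (Rabs (eta z - eta x) < e) by (apply Hd'; [apply Rabs_def1|]; lra).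
    apply Rabs_def2 in H. lra. }
  set (u := fun x => om x - I x).
  assert (Hucont : forall x, t0 <= x <= t -> forall eps, 0 < eps -> exists delta, 0 < delta /\
     forall y, t0 <= y <= t -> Rabs (y - x) < delta -> Rabs (u y - u x) < eps).
  { intros x Hx eps Heps. destruct (Homc x (Hdom x Hx) (eps/2) ltac:(lra)) as [d [Hd Hd']].
    exists (Rmin d (eps / (2 * (M + 1)))). split.
    { apply Rmin_glb_lt; auto. apply Rdiv_lt_0_compat; lra. }
    intros y Hy Hyx.
    assert (H1 : Rabs (om y - om x) < eps/2).
    { apply Hd'; [apply Hdom; auto|]. eapply Rlt_le_trans; [apply Hyx|apply Rmin_l]. }
    assert (H2 : Rabs (y - x) < eps / (2 * (M + 1))) by (eapply Rlt_le_trans; [apply Hyx|apply Rmin_r]).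
    assert (H3 : Rabs (I y - I x) < eps / 2).
    { eapply Rle_lt_trans; [apply HIlip; auto|].
      apply Rle_lt_trans with ((M+1) * Rabs (y - x)); [apply Rmult_le_compat_r; [apply Rabs_pos|lra]|].
      apply Rmult_lt_reg_r with (/ (M + 1)); [apply Rinv_0_lt_compat; lra|].
      replace ((M + 1) * Rabs (y - x) * / (M + 1)) with (Rabs (y - x)) by (field; lra).
      replace (eps / 2 * / (M + 1)) with (eps / (2 * (M + 1))) by (field; lra). auto. }
    unfold u. apply Rabs_def2 in H1. apply Rabs_def2 in H3. apply Rabs_def1; lra. }
  assert (Huslope : forall x, t0 <= x < t -> forall e, 0 < e -> exists d, 0 < d /\
     forall h, 0 < h < d -> x + h <= t -> u (x + h) - u x <= (- th (om x) + e) * h).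
  { intros x Hx e He.
    destruct (dini_eps om x _ (Hdini x (Hdom x ltac:(lra))) (e/2) ltac:(lra)) as [d1 [Hd1 Hd1']].
    destruct (HIright x Hx (e/2) ltac:(lra)) as [d2 [Hd2 Hd2']].
    exists (Rmin d1 d2). split; [apply Rmin_glb_lt; auto|].
    intros h Hh Hxh. assert (Rmin d1 d2 <= d1) by apply Rmin_l. assert (Rmin d1 d2 <= d2) by apply Rmin_r.
    specialize (Hd1' h ltac:(lra)). specialize (Hd2' h ltac:(lra) Hxh).
    unfold u. lra. }
  assert (Hthnn : forall x, t0 <= x <= t -> 0 <= th (om x)).
  { intros x Hx. apply theta_nonneg; auto. }
  destruct (classic (exists s, t0 <= s <= t /\ om s <= 2 * I s)) as [[s [Hs Hs2]]|Hno].
  -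
    assert (Hut : u t <= u s).
    { apply slope_lemma; [lra| |].
      - intros x Hx eps Heps. destruct (Hucont x ltac:(lra) eps Heps) as [d [Hd Hd']].
        exists d. split; auto. intros y Hy Hyx. apply Hd'; auto; lra.
      - intros x Hx e He. destruct (Huslope x ltac:(lra) e He) as [d [Hd Hd']].
        exists d. split; auto. intros h Hh Hxh. specialize (Hd' h Hh Hxh).
        pose proof (Hthnn x ltac:(lra)). nra. }
    unfold u in Hut. pose proof (HImono s t ltac:(lra) ltac:(lra) ltac:(lra)).
    pose proof (beta_ge0 th HP (om t0) (t - t0)). fold I. lra.
  -
    assert (H2 : forall s, t0 <= s <= t -> 2 * I s < om s).
    { intros s Hs. apply Rnot_le_lt. intro Hle. apply Hno. exists s. auto. }
    assert (Hupos : forall s, t0 <= s <= t -> 0 < u s /\ u s <= om s <= 2 * u s).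
    { intros s Hs. pose proof (H2 s Hs). pose proof (HIge0 s Hs). unfold u. lra. }
    set (f := fun x => x - Gf th HP (u x)).
    assert (Hf : f t <= f t0).
    { apply slope_lemma; auto.
      - intros x Hx eps Heps. destruct (Hupos x Hx) as [Hux _].
        destruct (Gf_cont th HP (u x) Hux (eps/2) ltac:(lra)) as [d1 [Hd1 Hd1']].
        destruct (Hucont x Hx d1 Hd1) as [d2 [Hd2 Hd2']].
        exists (Rmin d2 (eps/2)). split; [apply Rmin_glb_lt; lra|].
        intros y Hy Hyx. assert (Rmin d2 (eps/2) <= d2) by apply Rmin_l.
        assert (Rmin d2 (eps/2) <= eps/2) by apply Rmin_r.
        destruct (Hd1' (u y)) as [_ HG]; [apply Hd2'; auto; lra|].
        unfold f. apply Rabs_def2 in HG. apply Rabs_def2 in Hyx. apply Rabs_def1; lra.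
      - intros x Hx e He.
        destruct (Hupos x ltac:(lra)) as [Hv [Hv1 Hv2]].
        set (v := u x) in *.
        set (e' := Rmin e 1).
        assert (He'1 : e' <= e) by apply Rmin_l. assert (He'2 : e' <= 1) by apply Rmin_r.
        assert (He'0 : 0 < e') by (apply Rmin_glb_lt; lra).
        set (p := rhat th (proj1 HP) v).
        assert (Hp : 0 < p) by (apply rhat_pos; auto).
        assert (Hpth : p <= th (om x)) by (apply rhat_le_th; auto; lra).
        destruct (Huslope x Hx (e' * p / 2)) as [d1 [Hd1 Hd1']]; [apply Rdiv_lt_0_compat; nra|].
        destruct (Gf_local th HP v Hv (e' / (2 * p))) as [d2 [Hd2 Hd2']]; [apply Rdiv_lt_0_compat; lra|].
        destruct (Hucont x ltac:(lra) d2 Hd2) as [d3 [Hd3 Hd3']].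
        exists (Rmin d1 d3). split; [apply Rmin_glb_lt; auto|].
        intros h Hh Hxh. assert (Rmin d1 d3 <= d1) by apply Rmin_l. assert (Rmin d1 d3 <= d3) by apply Rmin_r.
        specialize (Hd1' h ltac:(lra) Hxh).
        assert (Hy3 : Rabs (u (x + h) - v) < d2) by (apply Hd3'; [lra|]; rewrite Rabs_right; lra).
        apply Rabs_def2 in Hy3.
        assert (Hdec : v - u (x + h) >= (p - e' * p / 2) * h).
        { fold v in Hd1'. nra. }
        assert (Hpp : 0 < p - e' * p / 2) by nra.
        assert (Hdpos : 0 < (p - e' * p / 2) * h) by (apply Rmult_lt_0_compat; lra).
        specialize (Hd2' (u (x + h)) ltac:(lra)).
        assert (Hg : gfun th (proj1 HP) v = / p) by reflexivity.
        rewrite Hg in Hd2'.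
        assert (HB : 0 <= / p - e' / (2 * p)).
        { replace (/ p - e' / (2 * p)) with ((1 - e'/2) / p) by (field; lra).
          apply Rlt_le, Rdiv_lt_0_compat; lra. }
        assert (HAB : (v - u (x + h)) * (/ p - e' / (2 * p)) >= (p - e' * p / 2) * h * (/ p - e' / (2 * p))).
        { apply Rle_ge, Rmult_le_compat_r; lra. }
        assert (Hid : (p - e' * p / 2) * h * (/ p - e' / (2 * p)) = (1 - e'/2) * (1 - e'/2) * h)
          by (field; lra).
        unfold f. fold v. nra. }
    unfold f in Hf. unfold u in Hf. rewrite HI0, Rminus_0_r in Hf.
    destruct (Hupos t0 ltac:(lra)) as [Hu0 _]. unfold u in Hu0. rewrite HI0, Rminus_0_r in Hu0.
    destruct (Hupos t ltac:(lra)) as [Hut _].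
    rewrite beta_pos by auto.
    assert (Hmain : u t <= Hinv th HP (Gf th HP (om t0) + (t - t0))).
    { rewrite <- (Hinv_Gf th HP (u t) Hut). apply Hinv_mono. unfold u. lra. }
    unfold u in Hmain. pose proof (HIge0 t ltac:(lra)). fold I. lra.
Qed.
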